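(* Let $\mathcal C$ be an $R$-coring satisfying the left $\alpha$-condition. (i) If $M$ is a left $\mathcal C$-comodule that is finitely generated and projective as a left $R$-module, then ${}^*M$ is a rational right ${}^*\mathcal C$-module. (ii) Suppose $\mathcal C=M\oplus N$ as left $\mathcal C$-comodules. Then ${}^*M$ is a rational right ${}^*\mathcal C$-module if and only if $M$ is finitely generated as a left $R$-module.
   Context: An $R$-coring is a triple $(\mathcal C,\Delta,\varepsilon)$ with $\mathcal C$ an $R$-bimodule and $\Delta:\mathcal C\to\mathcal C\otimes_R\mathcal C$, $\varepsilon:\mathcal C\to R$ coassociative and counital $R$-bimodule maps; write $\Delta(c)=c_{(1)}\otimes_R c_{(2)}$. ${}^*\mathcal C={}_R\mathrm{Hom}(\mathcal C,R)$ is a ring with product $(f\#g)(c)=g(c_{(1)}f(c_{(2)}))$ and unit $\varepsilon$. $\mathcal C$ satisfies the left $\alpha$-condition if it is locally projective as a left $R$-module. A left $\mathcal C$-comodule is a left $R$-module $M$ with a coassociative counital left $R$-linear map $M\to\mathcal C\otimes_R M$, $m\mapsto m_{[-1]}\otimes m_{[0]}$. For a left comodule $M$, ${}^*M={}_R\mathrm{Hom}(M,R)$ is a right ${}^*\mathcal C$-module via $(h\cdot f)(m)=f(m_{[-1]}h(m_{[0]}))$. A right ${}^*\mathcal C$-module $X$ is rational if for every $x\in X$ there is $\sum_i x_i\otimes c_i\in X\otimes_R\mathcal C$ with $x\cdot f=\sum_i x_if(c_i)$ for all $f\in{}^*\mathcal C$. *)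

(* Defs.v *)
From HB Require Import structures.
From mathcomp Require Import all_boot all_order all_algebra.
Set Implicit Arguments. Unset Strict Implicit. Unset Printing Implicit Defensive.
Import GRing.Theory.
Local Open Scope ring_scope.

Section Corings.
Variable R : pzRingType.

(* An element
   of A (x)_R B is represented by a finite list of pairs (a_i, b_i), standing
   for sum_i a_i (x) b_i; two lists represent the same element of A (x)_R B
   iff every R-balanced biadditive map into an abelian group agrees on them. *)
Definition balanced (A : zmodType) (ra : A -> R -> A) (B : lmodType R)
    (G : zmodType) (phi : A -> B -> G) : Prop :=
  [/\ forall a a' b, phi (a + a') b = phi a b + phi a' b,
      forall a b b', phi a (b + b') = phi a b + phi a b' &
      forall a r b, phi (ra a r) b = phi a (r *: b)].

Definition teq (A : zmodType) (ra : A -> R -> A) (B : lmodType R)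
    (s t : seq (A * B)) : Prop :=
  forall (G : zmodType) (phi : A -> B -> G), balanced ra phi ->
    \sum_(p <- s) phi p.1 p.2 = \sum_(p <- t) phi p.1 p.2.

(* triple tensor A (x)_R B (x)_R D, with B an R-bimodule *)
Definition balanced3 (A : zmodType) (ra : A -> R -> A) (B : lmodType R)
    (rb : B -> R -> B) (D : lmodType R) (G : zmodType)
    (phi : A -> B -> D -> G) : Prop :=
  [/\ forall a a' b d, phi (a + a') b d = phi a b d + phi a' b d,
      forall a b b' d, phi a (b + b') d = phi a b d + phi a b' d,
      forall a b d d', phi a b (d + d') = phi a b d + phi a b d',
      forall a r b d, phi (ra a r) b d = phi a (r *: b) d &
      forall a b r d, phi a (rb b r) d = phi a b (r *: d)].

Definition teq3 (A : zmodType) (ra : A -> R -> A) (B : lmodType R)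
    (rb : B -> R -> B) (D : lmodType R) (s t : seq (A * B * D)) : Prop :=
  forall (G : zmodType) (phi : A -> B -> D -> G), balanced3 ra rb phi ->
    \sum_(p <- s) phi p.1.1 p.1.2 p.2 = \sum_(p <- t) phi p.1.1 p.1.2 p.2.

Definition surjective (A B : Type) (g : A -> B) := forall y, exists x, g x = y.

Definition in_span (M : lmodType R) (s : seq M) (x : M) : Prop :=
  exists (n : nat) (a : 'I_n -> R) (v : 'I_n -> M),
    (forall i, v i \in s) /\ x = \sum_(i < n) a i *: v i.

Definition finitely_generated (M : lmodType R) : Prop :=
  exists s : seq M, forall x, in_span s x.

Definition projective (M : lmodType R) : Prop :=
  forall (L N : lmodType R) (g : {linear L -> N}) (h : {linear M -> N}),
    surjective g -> exists h' : {linear M -> L}, forall x, g (h' x) = h x.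

Definition locally_projective (M : lmodType R) : Prop :=
  forall (L N : lmodType R) (g : {linear L -> N}) (h : {linear M -> N}),
    surjective g -> forall s : seq M,
    exists h' : {linear M -> L}, forall x, in_span s x -> g (h' x) = h x.

Record coring (C : lmodType R) := Coring {
  rC : C -> R -> C;
  Delta : C -> seq (C * C);
  eps : C -> R;
  rC_addl : forall c c' r, rC (c + c') r = rC c r + rC c' r;
  rC_addr : forall c r s, rC c (r + s) = rC c r + rC c s;
  rC_1 : forall c, rC c 1 = c;
  rC_mul : forall c r s, rC c (r * s) = rC (rC c r) s;
  rC_bimod : forall a c r, rC (a *: c) r = a *: rC c r;
  Delta_add : forall c c', teq rC (Delta (c + c')) (Delta c ++ Delta c');
  Delta_scalel : forall a c,
    teq rC (Delta (a *: c)) [seq (a *: p.1, p.2) | p <- Delta c];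
  Delta_scaler : forall c r,
    teq rC (Delta (rC c r)) [seq (p.1, rC p.2 r) | p <- Delta c];
  eps_add : forall c c', eps (c + c') = eps c + eps c';
  eps_scalel : forall a c, eps (a *: c) = a * eps c;
  eps_scaler : forall c r, eps (rC c r) = eps c * r;
  Delta_coassoc : forall c,
    teq3 rC rC
      [seq (q.1, q.2, p.2) | p <- Delta c, q <- Delta p.1]
      [seq (p.1, q.1, q.2) | p <- Delta c, q <- Delta p.2];
  Delta_counitl : forall c, \sum_(p <- Delta c) eps p.1 *: p.2 = c;
  Delta_counitr : forall c, \sum_(p <- Delta c) rC p.1 (eps p.2) = c
}.

Section Comodules.
Variables (C : lmodType R) (K : coring C).

Record comodule := Comodule {
  comod_car :> lmodType R;
  coact : comod_car -> seq (C * comod_car);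
  coact_add : forall m m', teq (rC K) (coact (m + m')) (coact m ++ coact m');
  coact_scale : forall a m,
    teq (rC K) (coact (a *: m)) [seq (a *: p.1, p.2) | p <- coact m];
  coact_coassoc : forall m,
    teq3 (rC K) (rC K)
      [seq (q.1, q.2, p.2) | p <- coact m, q <- Delta K p.1]
      [seq (p.1, q.1, q.2) | p <- coact m, q <- coact p.2];
  coact_counit : forall m, \sum_(p <- coact m) eps K p.1 *: p.2 = m
}.

Definition comod_hom_to_C (M : comodule) (g : {linear M -> C}) : Prop :=
  forall m, teq (rC K) (Delta K (g m)) [seq (p.1, g p.2) | p <- coact m].

Definition direct_sum_decomp (M N : comodule)
    (iM : {linear M -> C}) (iN : {linear N -> C}) : Prop :=
  (forall c, exists m n, c = iM m + iN n) /\
  (forall m n, iM m + iN n = 0 -> m = 0 /\ n = 0).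

Definition dual_act (M : comodule) (h : M -> R) (f : C -> R) : M -> R :=
  fun m => \sum_(p <- coact m) f (rC K p.1 (h p.2)).

Definition rational_dual (M : comodule) : Prop :=
  forall h : {linear M -> R^o},
  exists s : seq ({linear M -> R^o} * C),
    forall (f : {linear C -> R^o}) (m : M),
      dual_act h f m = \sum_(p <- s) p.1 m * f p.2.

End Comodules.
End Corings.

(* Main.v *)
Require Import Defs.
From HB Require Import structures.
From mathcomp Require Import all_boot all_order all_algebra.
From mathcomp.multinomials Require Import monalg.
From mathcomp Require Import finmap.
From Stdlib Require Import ClassicalEpsilon.
Set Implicit Arguments. Unset Strict Implicit. Unset Printing Implicit Defensive.
Import GRing.Theory.
Local Open Scope ring_scope.

Definition mkL (R : pzRingType) (U V : lmodType R) (f : U -> V)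
  (H : forall a x y, f (a *: x + y) = a *: f x + f y) : {linear U -> V} :=
  HB.pack f (GRing.isLinear.Build R U V *:%R f H).
Lemma mkLE R U V f H x : @mkL R U V f H x = f x. Proof. by []. Qed.

Definition free (K : choiceType) (R : pzRingType) : Type := malg K R.
HB.instance Definition _ K R := GRing.Zmodule.on (free K R).

Section Free.
Variables (K : choiceType) (R : pzRingType).
Definition fscale (c : R) (g : free K R) : free K R :=
  [malg k in msupp g => c * g@_k].
Lemma fscaleE c g k : (fscale c g)@_k = c * g@_k.
Proof.
rewrite /fscale mcoeffE; case: ifP => // /negbT H.
by rewrite mcoeff_outdom // mulr0.
Qed.
Lemma fscaleA a b g : fscale a (fscale b g) = fscale (a * b) g.
Proof. by apply/malgP => k; rewrite !fscaleE mulrA. Qed.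
Lemma fscale1 g : fscale 1 g = g.
Proof. by apply/malgP => k; rewrite !fscaleE mul1r. Qed.
Lemma fscaleDr a : {morph fscale a : x y / x + y}.
Proof. by move=> x y; apply/malgP => k; rewrite !(fscaleE, mcoeffD) mulrDr. Qed.
Lemma fscaleDl v : {morph fscale^~ v : a b / a + b}.
Proof. by move=> x y; apply/malgP => k; rewrite !(fscaleE, mcoeffD) mulrDl. Qed.
HB.instance Definition _ := GRing.Zmodule_isLmodule.Build R (free K R)
  fscaleA fscale1 fscaleDr fscaleDl.
End Free.

Section Sep.
Variables (R : pzRingType) (C : lmodType R).

Definition gC (x : free C R) : C := \sum_(k <- msupp x) x@_k *: k.
Lemma gCw (x : free C R) D : (msupp x `<=` D)%fset -> gC x = \sum_(k <- D) x@_k *: k.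
Proof.
move=> H; rewrite /gC; apply: big_fset_incl => // k _ kn.
by rewrite mcoeff_outdom // scale0r.
Qed.
Lemma gC_lin a x y : gC (a *: x + y) = a *: gC x + gC y.
Proof.
set D := (msupp x `|` msupp y `|` msupp (a *: x + y))%fset.
rewrite (@gCw _ D); last by apply/fsubsetP => k kx; rewrite /D !inE kx !orbT.
rewrite (@gCw x D); last by apply/fsubsetP => k kx; rewrite /D !inE kx.
rewrite (@gCw y D); last by apply/fsubsetP => k kx; rewrite /D !inE kx !orbT.
rewrite scaler_sumr -big_split /=; apply: eq_bigr => k _.
by rewrite mcoeffD /= fscaleE scalerDl scalerA.
Qed.
Definition gCL := mkL gC_lin.
Lemma mcoeff_lin (k : C) a (x y : free C R) : ((a *: x + y)@_k : R^o) = a *: (x@_k : R^o) + (y@_k : R^o).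
Proof. by rewrite mcoeffD /= fscaleE. Qed.
Definition mcL k := mkL (mcoeff_lin k).

Lemma separate (alpha : locally_projective C) (d : C) :
  (forall f : {linear C -> R^o}, f d = 0) -> d = 0.
Proof.
move=> Hf.
have gsurj : surjective gCL.
  move=> c; exists << 1 *g c >>; rewrite mkLE (@gCw _ [fset c]%fset).
    by rewrite big_seq_fset1 mcoeffUU scale1r.
  exact: msuppU_le.
have [h' Hh'] := alpha _ _ gCL (mkL (fun a x y => erefl (a *: x + y))) gsurj [:: d].
have dsp : in_span [:: d] d.
  exists 1%N, (fun _ => 1), (fun _ => d); split => [i|]; first by rewrite mem_seq1.
  by rewrite big_ord1 scale1r.
have := Hh' d dsp; rewrite !mkLE => <-.
have -> : h' d = 0.
  apply/malgP => k; rewrite mcoeff0.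
  exact: (Hf (mcL k \o h')).
exact: (raddf0 gCL).
Qed.
End Sep.

Section Main.
Variables (R : pzRingType) (C : lmodType R) (K : coring C).

Lemma linZo (U : lmodType R) (h : {linear U -> R^o}) r x : h (r *: x) = r * h x.
Proof. by rewrite linearZ. Qed.

Section Ph.
Variables (M : comodule K) (h : {linear M -> R^o}).
Definition ph (m : M) : C := \sum_(p <- coact m) rC K p.1 (h p.2).

Lemma ph_bal : balanced (rC K) (fun (c : C) (x : M) => rC K c (h x)).
Proof.
split.
- by move=> a a' b; rewrite rC_addl.
- by move=> a b b'; rewrite raddfD rC_addr.
- by move=> a r b; rewrite -rC_mul linZo.
Qed.

Lemma ph_lin a x y : ph (a *: x + y) = a *: ph x + ph y.
Proof.
rewrite /ph (coact_add _ _ ph_bal) big_cat /= (coact_scale _ _ ph_bal) big_map /=.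
rewrite scaler_sumr; congr (_ + _); apply: eq_bigr => p _.
by rewrite rC_bimod.
Qed.
Definition phL := mkL ph_lin.

Lemma dual_actE (f : {linear C -> R^o}) m : dual_act h f m = f (ph m).
Proof. by rewrite /dual_act /ph raddf_sum. Qed.
End Ph.

Lemma dual_basis_rational (M : comodule K) n (e : 'I_n -> {linear M -> R^o})
   (s : 'I_n -> M) : (forall m, m = \sum_(j < n) (e j m : R) *: s j) -> rational_dual M.
Proof.
move=> Hm h.
exists [seq (e j, ph h (s j)) | j <- enum 'I_n] => f m.
have -> : dual_act h f m = f (phL h (\sum_(j < n) (e j m : R) *: s j)).
  by rewrite -Hm dual_actE.
rewrite (linear_sum (phL h)) raddf_sum big_map big_enum /=; apply: eq_bigr => j _.
by rewrite -[ph h (_ *: _)]/(phL h _) linearZ linZo.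
Qed.

Lemma span_vec (M : lmodType R) (s : seq M) x : in_span s x ->
  exists w : 'I_(size s) -> R, x = \sum_(j < size s) w j *: s`_j.
Proof.
case=> n [a [v [Hv ->]]].
elim: n a v Hv => [|n IH] a v Hv.
  by exists (fun _ => 0); rewrite big_ord0 big1 // => j _; rewrite scale0r.
rewrite big_ord_recr /=.
have [w Hw] := IH (fun i => a (widen_ord (leqnSn n) i))
                  (fun i => v (widen_ord (leqnSn n) i)) (fun i => Hv _).
have Hi : (index (v ord_max) s < size s)%N by rewrite index_mem.
exists (fun j => w j + (if j == Ordinal Hi then a ord_max else 0)).
rewrite Hw; under eq_bigr => j _ do rewrite scalerDl.
rewrite big_split /=; congr (_ + _).
rewrite (bigD1 (Ordinal Hi)) //= eqxx big1 ?addr0.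
  by rewrite nth_index.
by move=> j /negbTE ->; rewrite scale0r.
Qed.

Definition gen (M : lmodType R) n (s : 'I_n -> M) (v : 'rV[R]_n) : M :=
  \sum_(j < n) v 0 j *: s j.
Lemma gen_lin (M : lmodType R) n (s : 'I_n -> M) a x y :
  gen s (a *: x + y) = a *: gen s x + gen s y.
Proof.
rewrite /gen scaler_sumr -big_split; apply: eq_bigr => j _.
by rewrite !mxE scalerDl scalerA.
Qed.
Definition genL (M : lmodType R) n (s : 'I_n -> M) := mkL (gen_lin s).

Lemma coord_lin n (j : 'I_n) a (x y : 'rV[R]_n) :
  ((a *: x + y) 0 j : R^o) = a *: (x 0 j : R^o) + (y 0 j : R^o).
Proof. by rewrite !mxE. Qed.
Definition coordL n (j : 'I_n) := mkL (coord_lin j).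

Lemma gen_surj (M : lmodType R) (s : seq M) : (forall x, in_span s x) ->
  surjective (genL (fun j : 'I_(size s) => s`_j)).
Proof.
move=> Hs y; have [w Hw] := span_vec (Hs y).
exists (\row_j w j); rewrite mkLE /gen Hw; apply: eq_bigr => j _.
by rewrite mxE.
Qed.

Lemma part1 (M : comodule K) :
  finitely_generated M -> projective M -> rational_dual M.
Proof.
case=> s Hs Hp.
have [h' Hh'] := Hp _ _ _ (mkL (fun a x y => erefl (a *: x + y))) (gen_surj Hs).
apply: (@dual_basis_rational M (size s) (fun j => coordL j \o h') (fun j => s`_j)).
move=> m; have := Hh' m; rewrite !mkLE /gen => {1}<-; apply: eq_bigr => j _.
by [].
Qed.

Lemma part2b (M N : comodule K) (iM : {linear M -> C}) (iN : {linear N -> C}) :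
  locally_projective C -> direct_sum_decomp iM iN ->
  finitely_generated M -> rational_dual M.
Proof.
move=> alpha [Hdec Huniq] [s Hs].
pose n := size s.
pose G := genL (fun j : 'I_n => s`_j).
have g_lin : forall a (x y : ('rV[R]_n * N)%type),
   iM (G (a *: x + y).1) + iN (a *: x + y).2 =
   a *: (iM (G x.1) + iN x.2) + (iM (G y.1) + iN y.2).
  move=> a x y /=; rewrite gen_lin !linearP scalerDr.
  by rewrite addrACA.
pose g := mkL g_lin.
have gsurj : surjective g.
  move=> c; have [m [y ->]] := Hdec c.
  have [v Hv] := gen_surj Hs m.
  by exists (v, y); rewrite mkLE /=; rewrite mkLE in Hv; rewrite Hv.
have [h' Hh'] := alpha _ _ g (mkL (fun a x y => erefl (a *: x + y))) gsurj (map iM s).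
have Hsp : forall m, in_span (map iM s) (iM m).
  move=> m; have [k [a [v [Hv ->]]]] := Hs m.
  exists k, a, (fun i => iM (v i)); split; first by move=> i; rewrite map_f.
  by rewrite linear_sum; apply: eq_bigr => i _; rewrite linearZ.
have e_lin : forall j a (x y : M),
  (((h' (iM (a *: x + y))).1 0 j) : R^o) =
    a *: ((h' (iM x)).1 0 j : R^o) + ((h' (iM y)).1 0 j : R^o).
  by move=> j a x y; rewrite !linearP /= !mxE.
apply: (@dual_basis_rational M n (fun j => mkL (e_lin j)) (fun j => s`_j)).
move=> m.
have := Hh' _ (Hsp m); rewrite !mkLE => Heq.
have : iM (m - G (h' (iM m)).1) + iN (- (h' (iM m)).2) = 0.
  by rewrite !raddfB raddfN /= -{1}Heq addrAC addrK subrr.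
case/Huniq => Hm0 _; rewrite {1}(subr0_eq Hm0).
rewrite mkLE /gen; apply: eq_bigr => j _; by [].
Qed.

Lemma part2a (M N : comodule K) (iM : {linear M -> C}) (iN : {linear N -> C}) :
  locally_projective C -> comod_hom_to_C iM -> direct_sum_decomp iM iN ->
  rational_dual M -> finitely_generated M.
Proof.
move=> alpha Hhom [Hdec Huniq] Hrat.
have h_lin : forall a (x y : M), (eps K (iM (a *: x + y)) : R^o) =
    a *: (eps K (iM x) : R^o) + (eps K (iM y) : R^o).
  by move=> a x y; rewrite linearP eps_add eps_scalel.
have [s Hs] := Hrat (mkL h_lin).
have key : forall (f : {linear C -> R^o}) m,
    f (iM m) = \sum_(p <- s) p.1 m * f p.2.
  move=> f m; rewrite -Hs /dual_act.
  have bal : balanced (rC K) (fun c c' : C => f (rC K c (eps K c'))).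
    split.
    - by move=> a a' b; rewrite rC_addl raddfD.
    - by move=> a b b'; rewrite eps_add rC_addr raddfD.
    - by move=> a r b; rewrite -rC_mul eps_scalel.
  have := Hhom m _ _ bal; rewrite big_map /= => <-.
  by rewrite -raddf_sum Delta_counitr.
have Hsep : forall m, iM m = \sum_(p <- s) (p.1 m : R) *: p.2.
  move=> m; apply/eqP; rewrite -subr_eq0; apply/eqP; apply: (separate alpha) => f.
  rewrite raddfB; move: (key f m) => /= ->; rewrite raddf_sum /=.
  apply/eqP; rewrite subr_eq0; apply/eqP; apply: eq_bigr => p _.
  by rewrite linZo.
have Hd2 : forall c, {mn : (M * N)%type | c = iM mn.1 + iN mn.2}.
  move=> c; apply: constructive_indefinite_description.
  by have [m [n E]] := Hdec c; exists (m, n).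
pose pm c := (sval (Hd2 c)).1.
pose pn c := (sval (Hd2 c)).2.
have Hpmn : forall c, c = iM (pm c) + iN (pn c) by move=> c; exact: (svalP (Hd2 c)).
exists [seq pm p.2 | p <- s] => x.
have Hx : x = \sum_(p <- s) (p.1 x : R) *: pm p.2.
  have : iM (x - \sum_(p <- s) (p.1 x : R) *: pm p.2) +
         iN (- \sum_(p <- s) (p.1 x : R) *: pn p.2) = 0.
    rewrite raddfB raddfN !raddf_sum; move: (Hsep x) => /= ->.
    rewrite -addrA -!big_split /= big1 // => p _.
    by rewrite -opprD !linearZ -scalerDr -Hpmn subrr.
  by case/Huniq => H _; exact: subr0_eq H.
pose d0 := (mkL h_lin, (0 : C)).
exists (size s), (fun i => ((nth d0 s i).1 x : R)), (fun i => pm (nth d0 s i).2).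
split.
  move=> i; rewrite -(nth_map d0 0 (fun p => pm p.2)) ?mem_nth ?size_map //.
by apply: (etrans Hx); rewrite (big_nth d0) big_mkord.
Qed.

End Main.

Theorem lemma2p5 (R : pzRingType) (C : lmodType R) (K : coring C)
    (alpha : locally_projective C) :
  (forall M : comodule K,
      finitely_generated M -> projective M -> rational_dual M) /\
  (forall (M N : comodule K) (iM : {linear M -> C}) (iN : {linear N -> C}),
      comod_hom_to_C iM -> comod_hom_to_C iN -> direct_sum_decomp iM iN ->
      (rational_dual M <-> finitely_generated M)).
Proof.
split; first exact: part1.
move=> M N iM iN HM HN Hd; split.
  exact: part2a alpha HM Hd.
exact: part2b alpha Hd.
Qed.
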